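(* In the reward-seeking setting, for every instance and every $b>1$, the naive agent with present-bias parameter $b$ satisfies $b\cdot R_n(s)\ge R_o(s)$; that is, its reward ratio is at most $b$.
   Context: Reward-seeking instance: a finite directed acyclic graph $G=(V,E)$ with nonnegative edge rewards $r(u,v)$, start node $s$ and target node $t$, where $t$ is the unique node with no outgoing edges; the agent must travel from $s$ to $t$ and wishes to collect as much reward as possible. $R_o(u)$ is the maximum total reward of a $u$–$t$ path. The naive agent with bias $b$: $R_n(t)=0$, and for $u\ne t$, $S^{(R)}_n(u)\in\arg\max_{v:(u,v)\in E}\big(b\cdot r(u,v)+R_o(v)\big)$ and $R_n(u)=r(u,S^{(R)}_n(u))+R_n(S^{(R)}_n(u))$; $R_n(s)$ is the reward it collects. The reward ratio is $R_o(s)/R_n(s)$. *)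

(* Defs.v *)
From mathcomp Require Import all_boot all_order all_algebra.
Set Implicit Arguments. Unset Strict Implicit. Unset Printing Implicit Defensive.
Import Order.TTheory GRing.Theory Num.Theory.
Local Open Scope ring_scope.

Definition acyclic (V : finType) (E : rel V) : Prop :=
  forall (x : V) (p : seq V), path E x p -> last x p = x -> p = [::].

Definition is_path_to (V : finType) (E : rel V) (t u : V) (p : seq V) : bool :=
  path E u p && (last u p == t).

Definition path_reward (V : finType) (R : numDomainType) (r : V -> V -> R)
    (u : V) (p : seq V) : R :=
  \sum_(e <- zip (u :: p) p) r e.1 e.2.

Definition is_max_reward (V : finType) (R : numDomainType) (E : rel V)
    (r : V -> V -> R) (t u : V) (x : R) : Prop :=
  (exists p, is_path_to E t u p /\ path_reward r u p = x) /\
  (forall p, is_path_to E t u p -> path_reward r u p <= x).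

(* Main.v *)
Require Import Defs.
From mathcomp Require Import all_boot all_order all_algebra.
Import Order.TTheory GRing.Theory Num.Theory.
Local Open Scope ring_scope.

Lemma chain_path (V : finType) (E : rel V) (S : V -> V) (P : V -> bool) :
  (forall x, P x -> E x (S x) /\ P (S x)) ->
  forall n x, P x -> path E x (traject S (S x) n).
Proof.
move=> H; elim=> [|n IH] x Px //=.
have [e PS] := H x Px.
by rewrite e /=; apply: IH.
Qed.

Lemma no_inf_chain (V : finType) (E : rel V) (S : V -> V) (P : V -> bool) :
  acyclic E -> (forall x, P x -> E x (S x) /\ P (S x)) -> forall x, ~~ P x.
Proof.
move=> Hac H x; apply/negP => Px.
have Pit : forall k, P (iter k S x).
  by elim=> [|k IH] //=; have [_ ?] := H _ IH.
pose f := fun i : 'I_#|V|.+1 => iter i S x.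
have : ~~ injectiveb f.
  apply/negP => /injectiveP inj; have := @leq_card _ _ f inj.
  by rewrite card_ord ltnn.
case/injectivePn => i [j] nij fij.
wlog lij : i j nij fij / (i < j)%N.
  move=> W; case: (ltngtP i j) => [l|l|e]; first exact: W l.
  - by apply: (W j i) => //; rewrite eq_sym.
  - by move: nij; rewrite (val_inj e) eqxx.
set y := iter i S x.
have Hp := @chain_path _ E S P H (j - i) _ (Pit i).
have := Hac y _ Hp.
rewrite last_traject.
have -> : iter (j - i) S y = y.
  rewrite /y -iterD subnK ?(ltnW lij) //; by [].
move=> /(_ erefl).
by case: (j - i)%N (subn_gt0 i j) => [|m]; rewrite ?lij.
Qed.

Theorem claim5 (R : realFieldType) (V : finType) (E : rel V)
    (r : V -> V -> R) (s t : V) (b : R) :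
  acyclic E ->
  (forall u v, E u v -> 0 <= r u v) ->
  (forall u, (forall v, ~~ E u v) <-> u = t) ->
  1 < b ->
  forall Ro : V -> R, (forall u, is_max_reward E r t u (Ro u)) ->
  forall S : V -> V,
    (forall u, u != t ->
       E u (S u) /\
       (forall v, E u v -> b * r u v + Ro v <= b * r u (S u) + Ro (S u))) ->
  forall Rn : V -> R,
    Rn t = 0 ->
    (forall u, u != t -> Rn u = r u (S u) + Rn (S u)) ->
  Ro s <= b * Rn s.
Proof.
move=> Hac Hr Ht b1 Ro HRo S HS Rn Rnt HRn.
have Rot : Ro t = 0.
  have [[p [/andP [pp pl] <-]] _] := HRo t.
  case: p pp pl => [|v p] /=; first by rewrite /path_reward big_nil.
  by move=> /andP [e _]; have := (proj2 (Ht t) erefl v); rewrite e.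
have Rostep : forall u, u != t -> exists v, E u v /\ Ro u <= r u v + Ro v.
  move=> u ut; have [[p [/andP [pp pl] <-]] _] := HRo u.
  case: p pp pl => [|v p] /=; first by move=> _ /eqP e; rewrite e eqxx in ut.
  move=> /andP [e pp] pl; exists v; split => //.
  rewrite /path_reward /= big_cons /= lerD2l.
  by apply: (proj2 (HRo v)); rewrite /is_path_to pp pl.
pose P := fun u => b * Rn u < Ro u.
have step : forall x, P x -> E x (S x) /\ P (S x).
  move=> x; rewrite /P => Px.
  have xt : x != t by apply/eqP => e; move: Px; rewrite e Rnt Rot mulr0 ltxx.
  have [eS Hb] := HS x xt.
  split => //.
  rewrite ltNge; apply/negP => HSx.
  have [v [ev Hv]] := Rostep x xt.
  have : Ro x <= b * Rn x.
    apply: (le_trans Hv).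
    apply: (@le_trans _ _ (b * r x v + Ro v)).
      rewrite lerD2r -{1}(mul1r (r x v)) ler_wpM2r ?Hr //; exact: ltW.
    apply: (le_trans (Hb v ev)).
    by rewrite HRn // mulrDr lerD2l.
  by rewrite leNgt Px.
have := @no_inf_chain _ E S P Hac step s.
by rewrite /P -leNgt.
Qed.
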